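(* A function $f:(0,\infty)\to(0,\infty)$ is stable, i.e. satisfies $|f(x)-f(y)|\le\sqrt{\frac{f(x)f(y)}{xy}}\,|x-y|$ for all $x,y>0$, if and only if $x\mapsto f(x)/x$ is non-increasing and $x\mapsto xf(x)$ is non-decreasing. *)

(* Defs.v *)
From Stdlib Require Import Reals Lra.
Open Scope R_scope.

(* f : (0,oo) -> (0,oo) is modelled as f : R -> R with f x > 0 for x > 0;
   values of f outside (0,oo) are irrelevant (never used). *)
Definition positive_on_pos (f : R -> R) : Prop :=
  forall x, 0 < x -> 0 < f x.

Definition stable (f : R -> R) : Prop :=
  forall x y, 0 < x -> 0 < y ->
    Rabs (f x - f y) <= sqrt (f x * f y / (x * y)) * Rabs (x - y).

Definition ratio_nonincreasing (f : R -> R) : Prop :=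
  forall x y, 0 < x -> x <= y -> f y / y <= f x / x.

Definition prod_nondecreasing (f : R -> R) : Prop :=
  forall x y, 0 < x -> x <= y -> x * f x <= y * f y.

(* Main.v *)
Require Import Defs.
From Stdlib Require Import Reals Lra Psatz.
Open Scope R_scope.

Lemma L1 x y a b : 0 < x -> 0 < y -> 0 < a -> 0 < b ->
  (Rabs (a - b) <= sqrt (a * b / (x * y)) * Rabs (x - y) <->
   x * y * (a - b)^2 <= a * b * (x - y)^2).
Proof.
  intros hx hy ha hb.
  assert (hq : 0 <= a * b / (x * y)).
  { apply Rlt_le; apply Rdiv_lt_0_compat; nra. }
  set (s := sqrt (a * b / (x * y))).
  assert (hs : 0 <= s) by apply sqrt_pos.
  assert (hs2 : s * s = a * b / (x * y)) by (apply sqrt_sqrt; exact hq).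
  assert (hxy : 0 < x * y) by nra.
  assert (hs3 : x * y * (s * s) = a * b).
  { rewrite hs2. field. lra. }
  assert (E1 : Rabs (a - b) ^ 2 = (a - b) ^ 2) by (rewrite <- Rsqr_pow2, <- Rsqr_abs; unfold Rsqr; ring).
  assert (E2 : Rabs (x - y) ^ 2 = (x - y) ^ 2) by (rewrite <- Rsqr_pow2, <- Rsqr_abs; unfold Rsqr; ring).
  assert (P1 := Rabs_pos (a - b)). assert (P2 := Rabs_pos (x - y)).
  set (u := Rabs (a - b)) in *. set (v := Rabs (x - y)) in *.
  split; intro H.
  - assert (u ^ 2 <= (s * v) ^ 2) by nra.
    rewrite E1 in H0. replace ((s*v)^2) with (s*s*v^2) in H0 by ring.
    rewrite E2 in H0. nra.
  - assert (x * y * u^2 <= x * y * (s * s) * v^2) by (rewrite E1, E2, hs3; lra).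
    assert (u^2 <= (s*v)^2) by nra.
    destruct (Rle_dec u (s*v)) as [|n]; [assumption|]. apply Rnot_le_lt in n. assert (0 <= s*v) by nra. assert (0 < (u - s*v)*(u + s*v)) by (apply Rmult_lt_0_compat; lra). nra.
Qed.

Lemma L2 x y a b : 0 < x -> x < y -> 0 < a -> 0 < b ->
  (x * y * (a - b)^2 <= a * b * (x - y)^2 <-> (b * x <= a * y /\ x * a <= y * b)).
Proof.
  intros hx hxy ha hb.
  assert (E : x * y * (a - b)^2 - a * b * (x - y)^2 = (x*a - y*b) * (y*a - x*b)) by ring.
  split.
  - intro H. assert (H' : (x*a - y*b) * (y*a - x*b) <= 0) by lra.
    destruct (Rle_dec (x*a) (y*b)) as [r1|r1]; destruct (Rle_dec (b*x) (a*y)) as [r2|r2]; try (split; lra);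
    apply Rnot_le_lt in r2 || apply Rnot_le_lt in r1; try apply Rnot_le_lt in r1.
    + assert (x*a = y*b) by nra. exfalso. nra.
    + assert (y*a = x*b) by nra. exfalso. nra.
    + exfalso. nra.
  - intros [h1 h2]. assert ((x*a - y*b) * (y*a - x*b) <= 0) by nra. lra.
Qed.

Lemma Ldiv x y a b : 0 < x -> 0 < y -> (b / y <= a / x <-> b * x <= a * y).
Proof.
  intros hx hy.
  assert (E : a / x - b / y = (a * y - b * x) / (x * y)) by (field; lra).
  assert (hxy : 0 < x * y) by nra.
  split; intro H.
  - assert (0 <= (a * y - b * x) / (x * y)) by lra.
    assert (0 <= (a * y - b * x) / (x * y) * (x * y)) by nra.
    replace ((a * y - b * x) / (x * y) * (x * y)) with (a * y - b * x) in H1 by (field; lra).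
    lra.
  - assert (0 <= (a * y - b * x) / (x * y)).
    { apply Rmult_le_pos; [lra|]. apply Rlt_le, Rinv_0_lt_compat; lra. }
    lra.
Qed.

Theorem mainTheorem7 (f : R -> R) (hf : positive_on_pos f) :
  stable f <-> (ratio_nonincreasing f /\ prod_nondecreasing f).
Proof.
  unfold stable, ratio_nonincreasing, prod_nondecreasing.
  split.
  - intro S. split; intros x y hx hxy;
    (destruct (Req_dec x y) as [<-|hne]; [lra|]);
    assert (hx' : x < y) by lra; assert (hy : 0 < y) by lra;
    pose proof (hf x hx); pose proof (hf y hy);
    pose proof (proj1 (L1 x y (f x) (f y) hx hy ltac:(auto) ltac:(auto)) (S x y hx hy)) as H1;
    destruct (proj1 (L2 x y (f x) (f y) hx hx' ltac:(auto) ltac:(auto)) H1) as [h1 h2].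
    + apply Ldiv; auto.
    + exact h2.
  - intros [R1 P1] x y hx hy.
    pose proof (hf x hx); pose proof (hf y hy).
    destruct (Rtotal_order x y) as [hlt|[<-|hgt]].
    + apply (proj2 (L1 x y (f x) (f y) hx hy ltac:(auto) ltac:(auto))).
      apply (proj2 (L2 x y (f x) (f y) hx hlt ltac:(auto) ltac:(auto))).
      split; [apply Ldiv; auto; apply R1; lra| apply P1; lra].
    + replace (f x - f x) with 0 by ring. rewrite Rabs_R0.
      apply Rmult_le_pos; [apply sqrt_pos| apply Rabs_pos].
    + apply (proj2 (L1 x y (f x) (f y) hx hy ltac:(auto) ltac:(auto))).
      assert (h : y * x * (f y - f x)^2 <= f y * f x * (y - x)^2).
      { apply (proj2 (L2 y x (f y) (f x) hy hgt ltac:(auto) ltac:(auto))).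
        split; [apply Ldiv; auto; apply R1; lra| apply P1; lra]. }
      nra.
Qed.
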